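(* Let $G$ be a finite simple graph with vertices $v_1,\dots,v_n$ ($n\ge 1$) in which no vertex is adjacent to all other vertices, let $d\ge 1$ be an integer, let $G'$ be the graph constructed from $(G,d)$ as described in the context, and let $h=n(n+1)+d$. Then $G$ has domatic number at least $d$ if and only if $G'$ has Hadwiger number at least $h$.
   Context: A dominating set of $G$ is a set $D$ of vertices such that every vertex of $G$ either lies in $D$ or is adjacent to a vertex of $D$. The domatic number of $G$ is the maximum number of pairwise disjoint dominating sets of $G$. The Hadwiger number of a graph is the largest $h$ such that there exist $h$ pairwise disjoint vertex sets, each inducing a connected subgraph, with an edge between every two of them (equivalently, the largest $h$ such that $K_h$ is a minor). Construction of $G'$ from a graph $G$ with vertices $v_1,\dots,v_n$ and an integer $d$: say $v_i$ dominates $v_j$ if $v_i=v_j$ or $v_iv_j$ is an edge of $G$. The vertex set of $G'$ consists of top vertices $t_1,\dots,t_d$, middle vertices $m_1,\dots,m_n$, and bottom vertices $b_{j,k}$ for $1\le j\le n$, $1\le k\le n+1$. Edges: the top vertices form a clique; the middle vertices form an independent set; the bottom vertices form a clique (of size $n(n+1)$); every top vertex is adjacent to every middle vertex; there are no top–bottom edges; middle vertex $m_i$ is adjacent to bottom vertex $b_{j,k}$ if and only if $v_i$ dominates $v_j$ in $G$. *)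

(* Defs.v *)
From mathcomp Require Import all_boot.
Set Implicit Arguments. Unset Strict Implicit. Unset Printing Implicit Defensive.

Definition simple_graph (T : finType) (e : rel T) : Prop :=
  symmetric e /\ irreflexive e.

Definition dominating (T : finType) (e : rel T) (D : {set T}) : bool :=
  [forall x, (x \in D) || [exists y in D, e x y]].

Definition has_k_disjoint_dominating (T : finType) (e : rel T) (k : nat) : bool :=
  [exists D : {ffun 'I_k -> {set T}},
     [forall i, dominating e (D i)] &&
     [forall i, forall j, (i != j) ==> [disjoint D i & D j]]].

(* domatic number = max number of pairwise disjoint dominating sets
   (at most #|T| when T is nonempty; k = 0 always qualifies) *)
Definition domatic_number (T : finType) (e : rel T) : nat :=
  \max_(k < #|T|.+1 | has_k_disjoint_dominating e k) k.

Definition induced_connected (T : finType) (e : rel T) (S : {set T}) : bool :=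
  (S != set0) &&
  [forall x in S, forall y in S,
     connect [rel u v | [&& u \in S, v \in S & e u v]] x y].

Definition has_K_minor (T : finType) (e : rel T) (k : nat) : bool :=
  [exists B : {ffun 'I_k -> {set T}},
     [forall i, induced_connected e (B i)] &&
     [forall i, forall j, (i != j) ==>
        ([disjoint B i & B j] && [exists x in B i, exists y in B j, e x y])]].

(* Hadwiger number = largest h with K_h a minor (h <= #|T| since branch sets
   are nonempty and disjoint) *)
Definition hadwiger_number (T : finType) (e : rel T) : nat :=
  \max_(k < #|T|.+1 | has_K_minor e k) k.

Definition dominates (n : nat) (e : rel 'I_n) (i j : 'I_n) : bool :=
  (i == j) || e i j.

(* vertices of G': top t_1..t_d, middle m_1..m_n, bottom b_{j,k} (k < n+1) *)
Definition Gp_vertex (n d : nat) : finType :=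
  ('I_d + ('I_n + ('I_n * 'I_n.+1)))%type.

Definition Gp_adj (n d : nat) (e : rel 'I_n) (x y : Gp_vertex n d) : bool :=
  match x, y with
  | inl i, inl j => i != j
  | inl _, inr (inl _) => true
  | inr (inl _), inl _ => true
  | inr (inl _), inr (inl _) => false
  | inr (inr p), inr (inr q) => p != q
  | inr (inl i), inr (inr p) => dominates e i p.1
  | inr (inr p), inr (inl i) => dominates e i p.1
  | inl _, inr (inr _) => false
  | inr (inr _), inl _ => false
  end.

Definition Gp (n d : nat) (e : rel 'I_n) : rel (Gp_vertex n d) :=
  fun x y => @Gp_adj n d e x y.

(* Main.v *)
Require Import Defs.
From mathcomp Require Import all_boot.
From mathcomp Require Import zify.
Set Implicit Arguments. Unset Strict Implicit. Unset Printing Implicit Defensive.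

Lemma disjointP (T : finType) (A B : {set T}) :
  reflect (forall x, x \in A -> x \in B -> False) [disjoint A & B].
Proof.
apply: (iffP idP) => [H x xA xB | H]; first by rewrite (disjointFr H xA) in xB.
rewrite -setI_eq0; apply/eqP/setP => x; rewrite !inE.
by apply/negbTE/negP => /andP []; exact: H.
Qed.

Lemma inj_count (I T : finType) (B : I -> {set T}) (A : {set T}) (P : {set I}) :
  (forall i j, i != j -> [disjoint B i & B j]) ->
  (forall i, i \in P -> exists y, y \in B i :&: A) -> #|P| <= #|A|.
Proof.
move=> Hdis Hex.
pose f i := [pick y in B i :&: A].
have Hf : {in P &, injective f}.
  move=> i j Hi Hj; rewrite /f.
  case: pickP => [y Hy|H0]; last by have [y Hy] := Hex i Hi; move: (H0 y); rewrite Hy.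
  case: pickP => [z Hz|H0]; last by have [y' Hy'] := Hex j Hj; move: (H0 y'); rewrite Hy'.
  move=> [eyz]; subst z.
  case: (eqVneq i j) => // Hne.
  move: Hy Hz; rewrite !inE => /andP [Hy _] /andP [Hz _].
  by move/disjointP: (Hdis i j Hne) => /(_ y Hy Hz).
rewrite -(card_in_imset Hf).
have: f @: P \subset Some @: A.
  apply/subsetP => o /imsetP [i Hi ->]; rewrite /f; case: pickP => [y|H0].
    by rewrite inE => /andP [_ Hy]; apply: imset_f.
  by have [y Hy] := Hex i Hi; move: (H0 y); rewrite Hy.
move/subset_leq_card. rewrite (card_imset _ (@Some_inj _)). done.
Qed.

Lemma max_attained N (P : pred 'I_N) m : 0 < m -> m <= \max_(i < N | P i) i ->
  exists2 i : 'I_N, P i & m <= i.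
Proof.
move=> m0 H.
case: (boolP [exists i, P i && (m <= i)]) => [/existsP [i /andP[]]|]; first by eauto.
move/existsPn => Hn; exfalso.
have: \max_(i < N | P i) i <= m.-1.
  apply/bigmax_leqP => i Pi; have := Hn i; rewrite Pi /= -ltnNge; lia.
lia.
Qed.

Lemma minor_of_family (T I : finType) (e : rel T) (F : I -> {set T}) :
  (forall i, induced_connected e (F i)) ->
  (forall i j, i != j -> [disjoint F i & F j] && [exists x in F i, exists y in F j, e x y]) ->
  has_K_minor e #|I|.
Proof.
move=> Hc Ha; apply/existsP; exists [ffun i => F (enum_val i)]; apply/andP; split.
  by apply/forallP => i; rewrite ffunE; exact: Hc.
apply/forallP => i; apply/forallP => j; apply/implyP => ne; rewrite !ffunE; apply: Ha.
by apply: contra ne => /eqP /enum_val_inj ->.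
Qed.

Lemma star_conn (T : finType) (e : rel T) (S : {set T}) c : c \in S ->
  (forall x, x \in S -> x != c -> e x c && e c x) -> induced_connected e S.
Proof.
move=> Hc Hx; rewrite /induced_connected; apply/andP; split.
  by apply/set0Pn; exists c.
apply/forall_inP => x xS; apply/forall_inP => y yS.
have Hxc : connect [rel u v | [&& u \in S, v \in S & e u v]] x c.
  case: (eqVneq x c) => [->|ne]; first exact: connect0.
  by apply: connect1; rewrite /= xS Hc; case/andP: (Hx x xS ne).
have Hcy : connect [rel u v | [&& u \in S, v \in S & e u v]] c y.
  case: (eqVneq y c) => [->|ne]; first exact: connect0.
  by apply: connect1; rewrite /= yS Hc; case/andP: (Hx y yS ne).
exact: connect_trans Hxc Hcy.
Qed.

Lemma card_Gp n d : #|Gp_vertex n d| = d + (n + n * n.+1).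
Proof. by rewrite /Gp_vertex !card_sum card_prod !card_ord. Qed.

Lemma K_from_dom n d (e : rel 'I_n) (D : 'I_d -> {set 'I_n}) :
  symmetric e -> (forall l, dominating e (D l)) ->
  (forall l l', l != l' -> [disjoint D l & D l']) ->
  has_K_minor (@Gp n d e) (n * n.+1 + d).
Proof.
move=> Hsym Hdom Hdis.
have -> : n * n.+1 + d = #|{: ('I_n * 'I_n.+1) + 'I_d}| by rewrite card_sum card_prod !card_ord.
pose F (i : ('I_n * 'I_n.+1) + 'I_d) : {set Gp_vertex n d} :=
  match i with
  | inl p => [set inr (inr p)]
  | inr l => inl l |: [set (inr (inl m) : Gp_vertex n d) | m in D l]
  end.
have memF : forall l (y : Gp_vertex n d), y \in F (inr l) ->
    y = inl l \/ exists2 m, m \in D l & y = inr (inl m).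
  move=> l y; rewrite /F in_setU1 => /orP [/eqP ->|/imsetP [m Hm ->]]; first by left.
  by right; exists m.
have memFm : forall l m, (inr (inl m) : Gp_vertex n d) \in F (inr l) = (m \in D l).
  move=> l m; rewrite /F in_setU1 /=.
  apply/imsetP/idP => [[m' Hm' [->]] //|Hm]; by exists m.
(* edge from a bottom vertex to a star *)
have Hbe : forall l (p : 'I_n * 'I_n.+1), exists2 m, m \in D l & dominates e m p.1.
  move=> l p; have /forallP /(_ p.1) /orP [Hin|/exists_inP [y Hy Hey]] := Hdom l.
    by exists p.1 => //; rewrite /dominates eqxx.
  by exists y => //; rewrite /dominates Hsym Hey orbT.
apply: (@minor_of_family _ _ _ F).
  case=> [p|l].
    apply: (@star_conn _ _ _ (inr (inr p))); first by rewrite inE.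
    by move=> x; rewrite inE => ->.
  apply: (@star_conn _ _ _ (inl l)); first by rewrite /F in_setU1 eqxx.
  move=> x /memF [->|[m _ ->]]; first by rewrite eqxx.
  by [].
case=> [p|l] [q|l'] ne.
- apply/andP; split.
    apply/disjointP => x; rewrite !inE => /eqP -> /eqP [] ep.
    by move: ne; rewrite ep eqxx.
  apply/exists_inP; exists (inr (inr p)); first by rewrite inE.
  apply/exists_inP; exists (inr (inr q)); first by rewrite inE.
  by rewrite /Gp /=; apply: contra ne => /eqP ->.
- apply/andP; split.
    apply/disjointP => x; rewrite inE => /eqP -> /memF [] // [m _] //.
  have [m Hm Hd] := Hbe l' p.
  apply/exists_inP; exists (inr (inr p)); first by rewrite inE.
  apply/exists_inP; exists (inr (inl m)); first by rewrite memFm.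
  by [].
- apply/andP; split.
    apply/disjointP => x /memF [->|[m _ ->]]; by rewrite inE.
  have [m Hm Hd] := Hbe l q.
  apply/exists_inP; exists (inr (inl m)); first by rewrite memFm.
  apply/exists_inP; exists (inr (inr q)); first by rewrite inE.
  by [].
- have nel : l != l' by apply: contra ne => /eqP ->.
  apply/andP; split.
    apply/disjointP => x /memF [->|[m Hm ->]] /memF [|[m' Hm']] //.
    + by move=> [el]; move: nel; rewrite el eqxx.
    + move=> [em]; subst m'.
      by move/disjointP: (Hdis l l' nel) => /(_ m Hm Hm').
  apply/exists_inP; exists (inl l); first by rewrite /F in_setU1 eqxx.
  apply/exists_inP; exists (inl l'); first by rewrite /F in_setU1 eqxx.
  by [].
Qed.

Definition bot n d (p : 'I_n * 'I_n.+1) : Gp_vertex n d := inr (inr p).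
Definition bottoms n d : {set Gp_vertex n d} := @bot n d @: [set: 'I_n * 'I_n.+1].

Lemma bottomfree_dominating n d (e : rel 'I_n) k (B : 'I_k -> {set Gp_vertex n d}) :
  symmetric e -> n * n.+1 + d <= k ->
  (forall i, induced_connected (@Gp n d e) (B i)) ->
  (forall i j, i != j -> [disjoint B i & B j] &&
      [exists x in B i, exists y in B j, @Gp n d e x y]) ->
  forall i0, [disjoint B i0 & bottoms n d] ->
  dominating e [set m | (inr (inl m) : Gp_vertex n d) \in B i0].
Proof.
move=> Hsym Hk Hc Ha i0 Hbf.
case: (boolP (dominating _ _)) => // Hnd; exfalso.
move: Hnd; rewrite /dominating negb_forall => /existsP [x].
rewrite negb_or => /andP [xM nex].
have Hnod : forall m, (inr (inl m) : Gp_vertex n d) \in B i0 -> ~~ dominates e m x.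
  move=> m Hm; rewrite /dominates negb_or; apply/andP; split.
    by apply: contra xM => /eqP <-; rewrite inE.
  apply: contra nex => emx; apply/exists_inP; exists m; first by rewrite inE.
  by rewrite Hsym.
pose row := (fun kk => @bot n d (x, kk)) @: [set: 'I_n.+1].
have Hrow : #|row| = n.+1.
  by rewrite card_imset ?cardsT ?card_ord // => a b [].
have rowbot : forall y, y \in row -> y \in bottoms n d.
  by move=> y /imsetP [kk _ ->]; apply: imset_f; rewrite inE.
have Hex : forall i, i \in [set: 'I_k] -> exists y, y \in B i :&: ~: row.
  move=> i _; case: (eqVneq i i0) => [->|ne].
    have /andP [/set0Pn [y Hy] _] := Hc i0.
    exists y; rewrite inE Hy /= inE; apply/negP => /rowbot Hyb.
    by move/disjointP: Hbf => /(_ y Hy Hyb).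
  case: (boolP (B i :&: ~: row == set0)) => [/eqP H0 | /set0Pn //]; exfalso.
  have ne' : i0 != i by rewrite eq_sym.
  have /andP [_ /exists_inP [x' Hx' /exists_inP [y Hy Hxy]]] := Ha i0 i ne'.
  have yrow : y \in row.
    apply: contraT => Hn.
    have : y \in B i :&: ~: row by rewrite inE Hy inE Hn.
    by rewrite H0 inE.
  move/imsetP: yrow => [kk _ Hyk]; subst y.
  move: Hxy; case: x' Hx' => [t|[m|p]] Hx'; rewrite /bot /Gp //=.
    by move=> Hd; have := Hnod m Hx'; rewrite Hd.
  have : (inr (inr p) : Gp_vertex n d) \in bottoms n d by apply: imset_f; rewrite inE.
  by move/disjointP: Hbf => H /(H _ Hx').
have Hdis : forall i j, i != j -> [disjoint B i & B j].
  by move=> i j /Ha /andP [].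
have := inj_count Hdis Hex.
rewrite cardsT card_ord.
have := cardsC row; rewrite card_Gp Hrow.
lia.
Qed.

Theorem lemma6 (n : nat) (e : rel 'I_n) (d : nat) :
  simple_graph e ->
  0 < n ->
  (forall v : 'I_n, exists2 u : 'I_n, u != v & ~~ e v u) ->
  0 < d ->
  (d <= domatic_number e <->
   n * n.+1 + d <= hadwiger_number (@Gp n d e)).
Proof.
move=> [Hsym _] n0 _ d0; split => H.
- rewrite /domatic_number in H.
  have [k Hk Hkd] := max_attained d0 H.
  move/existsP: Hk => [D /andP [/forallP Hdom /forallP Hdis]].
  have HK := @K_from_dom n d e (fun l => D (widen_ord Hkd l)) Hsym (fun l => Hdom _).
  have Hlt : n * n.+1 + d < #|Gp_vertex n d|.+1 by rewrite card_Gp; lia.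
  apply: (@leq_bigmax_cond _ (fun i : 'I_ _ => has_K_minor (@Gp n d e) i)
            (fun i => nat_of_ord i) (Ordinal Hlt)).
  apply: HK => l l' ne.
  move: (Hdis (widen_ord Hkd l)) => /forallP /(_ (widen_ord Hkd l')) /implyP; apply.
  by apply: contra ne => /eqP [] el; apply/eqP/val_inj.
- have h0 : 0 < n * n.+1 + d by lia.
  rewrite /hadwiger_number in H.
  have [k Hk Hkh] := max_attained h0 H.
  move/existsP: Hk => [B /andP [/forallP Hc /forallP Ha]].
  have Ha' : forall i j, i != j -> [disjoint B i & B j] &&
      [exists x in B i, exists y in B j, @Gp n d e x y].
    by move=> i j ne; move: (Ha i) => /forallP /(_ j) /implyP; apply.
  have Hdis' : forall i j, i != j -> [disjoint B i & B j].
    by move=> i j /Ha' /andP [].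
  pose S := [set i | [disjoint B i & bottoms n d]].
  have HS' : #|~: S| <= #|bottoms n d|.
    apply: (inj_count (B := fun i => B i)) => // i.
    by rewrite !inE -setI_eq0 => /set0Pn.
  have Hbot : #|bottoms n d| = n * n.+1.
    by rewrite card_imset ?cardsT ?card_prod ?card_ord // => a b [].
  have HSd : d <= #|S| by have := cardsC S; rewrite card_ord; lia.
  pose D l := [set m | (inr (inl m) : Gp_vertex n d) \in B (enum_val (widen_ord HSd l))].
  have Hdom : forall l, dominating e (D l).
    move=> l; apply: (bottomfree_dominating Hsym Hkh Hc Ha').
    by have := enum_valP (widen_ord HSd l); rewrite inE.
  have Hdisj : forall l l', l != l' -> [disjoint D l & D l'].
    move=> l l' ne; apply/disjointP => m; rewrite !inE => H1 H2.
    have ne' : enum_val (widen_ord HSd l) != enum_val (widen_ord HSd l').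
      apply: contra ne => /eqP /enum_val_inj [] el; by apply/eqP/val_inj.
    by move/disjointP: (Hdis' _ _ ne') => /(_ _ H1 H2).
  have Hdn : d <= n.
    have := @inj_count _ _ D [set: 'I_n] [set: 'I_d] Hdisj.
    rewrite !cardsT !card_ord; apply => l _.
    move: (Hdom l) => /forallP /(_ (Ordinal n0)) /orP [Hin|/exists_inP [y Hy _]].
      by exists (Ordinal n0); rewrite inE Hin inE.
    by exists y; rewrite inE Hy inE.
  have Hlt : d < #|'I_n|.+1 by rewrite card_ord.
  rewrite /domatic_number.
  apply: (@leq_bigmax_cond _ (fun i : 'I_ _ => has_k_disjoint_dominating e i)
            (fun i => nat_of_ord i) (Ordinal Hlt)).
  apply/existsP; exists [ffun l => D l]; apply/andP; split.
    by apply/forallP => l; rewrite ffunE.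
  apply/forallP => l; apply/forallP => l'; apply/implyP => ne; rewrite !ffunE.
  exact: Hdisj.
Qed.
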